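(* For every $z\in\mathfrak U$ one has $T(z)\neq0$ and $z-\frac1{T(z)}>0$, so that $\tau(z):=\ln\big(z-\frac1{T(z)}\big)$ is real; moreover, whenever $\tau(z)\in(V_{j-1},V_j)$ for some $1\le j\le n$, the quantity $\chi(z)$ is real. In particular, for every such $z\in\mathfrak U$, $(\tau(z),\chi(z))$ is a real point on the frozen boundary.
   Context: Let $V_0<V_1<\dots<V_n$, $\beta_1,\dots,\beta_n\in[-1,1]$, $\beta_0:=-1$, $\beta_{n+1}:=1$, $\beta_i\ne\beta_{i+1}$ for all $i$; $V:[V_0,V_n]\to\mathbb R$ continuous, linear with slope $\beta_i$ on $[V_{i-1},V_i]$. Define $$T(z)=\sum_{i=0}^n\tfrac12(\beta_{i+1}-\beta_i)\frac1{z-e^{V_i}},\qquad \mathfrak U=(-\infty,e^{V_0})\cup(e^{V_n},\infty)\cup\bigcup_{1\le i\le n,\ \beta_i=\pm1}(e^{V_{i-1}},e^{V_i}).$$ For $z\in\mathfrak U$ with $\tau=\tau(z)\in(V_{j-1},V_j)$, define $$\chi(z)=-\sum_{i=1}^{j-1}\tfrac12(1+\beta_i)\operatorname{Ln}\frac{ze^{-V_i}-1}{ze^{-V_{i-1}}-1}-\tfrac12(1+\beta_j)\operatorname{Ln}\frac{ze^{-\tau}-1}{ze^{-V_{j-1}}-1}+\tfrac12(1-\beta_j)\operatorname{Ln}\frac{ze^{-V_j}-1}{ze^{-\tau}-1}+\sum_{i=j+1}^n\tfrac12(1-\beta_i)\operatorname{Ln}\frac{ze^{-V_i}-1}{ze^{-V_{i-1}}-1}-\tfrac12\tau+\tfrac12(V(V_0)+V_0),$$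 where $\operatorname{Ln}$ is the principal logarithm (imaginary part in $(-\pi,\pi]$) and a term whose coefficient is $0$ is taken to be $0$. The frozen boundary is the set of points $(\tau(z),\chi(z))$; these are exactly the $(\tau,\chi)$ for which $S_{\tau,\chi}$ (the function $\int_{V_0}^{\tau}\frac12(1+V')\ln(1-e^{M}/z)dM-\int_\tau^{V_n}\frac12(1-V')\ln(1-e^{-M}z)dM-(\chi-\frac12V(\tau))\ln z$) has a double real critical point. *)

(* Defs.v *)
From Stdlib Require Import Reals.
From Coquelicot Require Import Coquelicot.
Open Scope R_scope.

(* Principal argument, with values in (-PI, PI]:
   PI on the negative real axis, otherwise the standard half-angle formula
   Arg (x + i y) = 2 atan (y / (|w| + x)).  (Value at 0 is irrelevant.) *)
Definition Arg (w : C) : R :=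
  if Req_EM_T (Im w) 0 then
    (if Rlt_dec (Re w) 0 then PI else 2 * atan (Im w / (Cmod w + Re w)))
  else 2 * atan (Im w / (Cmod w + Re w)).

Definition Ln (w : C) : C := (ln (Cmod w), Arg w).

Definition cterm (c : R) (w : C) : C :=
  if Req_EM_T c 0 then RtoC 0 else Cmult (RtoC c) (Ln w).

Definition betaE (n : nat) (beta : nat -> R) (i : nat) : R :=
  if Nat.eqb i 0 then -1 else if Nat.eqb i (S n) then 1 else beta i.

Definition Tfun (n : nat) (V : nat -> R) (beta : nat -> R) (z : R) : R :=
  sum_f_R0 (fun i => / 2 * (betaE n beta (S i) - betaE n beta i) / (z - exp (V i))) n.

Definition inU (n : nat) (V : nat -> R) (beta : nat -> R) (z : R) : Prop :=
  z < exp (V 0%nat) \/ exp (V n) < z \/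
  exists i : nat, (1 <= i <= n)%nat /\ (beta i = 1 \/ beta i = -1) /\
                  exp (V (i - 1)%nat) < z < exp (V i).

Definition ratio (z a b : R) : C :=
  RtoC ((z * exp (- a) - 1) / (z * exp (- b) - 1)).

(* chi(z) for tau = tau(z) in (V_{j-1}, V_j); v0 stands for V(V_0). *)
Definition chi (n : nat) (V : nat -> R) (beta : nat -> R) (v0 : R)
    (z tau : R) (j : nat) : C :=
  Cplus
   (Cplus
    (Cplus
     (Cplus
      (Copp (sum_n_m (fun i => cterm (/ 2 * (1 + beta i)) (ratio z (V i) (V (i - 1)%nat)))
                     1 (j - 1)))
      (Copp (cterm (/ 2 * (1 + beta j)) (ratio z tau (V (j - 1)%nat)))))
     (cterm (/ 2 * (1 - beta j)) (ratio z (V j) tau)))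
    (sum_n_m (fun i => cterm (/ 2 * (1 - beta i)) (ratio z (V i) (V (i - 1)%nat)))
             (S j) n))
   (RtoC (- (/ 2) * tau + / 2 * (v0 + V 0%nat))).

(* Main.v *)
Require Import Defs.
From Stdlib Require Import Reals Lra Lia.
From Coquelicot Require Import Coquelicot.
Open Scope R_scope.

Definition rv (z a b : R) : R := (z * exp (- a) - 1) / (z * exp (- b) - 1).

Fixpoint ssum (u : nat -> R) (m : nat) : R :=
  match m with O => 0 | S m' => ssum u m' + u m' end.

Lemma sum_f_R0_ssum u m : sum_f_R0 u m = ssum u (S m).
Proof. induction m; simpl in *. lra. rewrite IHm; lra. Qed.

Lemma ssum_ext u v m : (forall k, (k < m)%nat -> u k = v k) -> ssum u m = ssum v m.
Proof. induction m; intros H; simpl. reflexivity. rewrite H by lia. rewrite IHm. reflexivity.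
  intros; apply H; lia. Qed.

Lemma ssum_lin a b u v m : ssum (fun k => a * u k + b * v k) m = a * ssum u m + b * ssum v m.
Proof. induction m; simpl. ring. rewrite IHm. ring. Qed.

Lemma ssum_nonneg u m : (forall k, (k < m)%nat -> 0 <= u k) -> 0 <= ssum u m.
Proof. induction m; intros H; simpl. lra. assert (0 <= u m) by (apply H; lia).
  assert (0 <= ssum u m) by (apply IHm; intros; apply H; lia). lra. Qed.

Lemma ssum_nonpos u m : (forall k, (k < m)%nat -> u k <= 0) -> ssum u m <= 0.
Proof. induction m; intros H; simpl. lra. assert (u m <= 0) by (apply H; lia).
  assert (ssum u m <= 0) by (apply IHm; intros; apply H; lia). lra. Qed.

Lemma ssum_tele h m : ssum (fun k => h (S k) - h k) m = h m - h O.
Proof. induction m; simpl. ring. rewrite IHm. ring. Qed.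

Lemma abel b h m : ssum (fun i => (b (S i) - b i) * h i) (S m) =
  b (S m) * h m - b O * h O - ssum (fun k => b (S k) * (h (S k) - h k)) m.
Proof. induction m. simpl. ring. change (ssum (fun i => (b (S i) - b i) * h i) (S m)
  + (b (S (S m)) - b (S m)) * h (S m) = b (S (S m)) * h (S m) - b O * h O -
  (ssum (fun k => b (S k) * (h (S k) - h k)) m + b (S m) * (h (S m) - h m))).
  rewrite IHm. ring. Qed.

Definition Sh n beta (h : nat -> R) :=
  ssum (fun i => / 2 * (betaE n beta (S i) - betaE n beta i) * h i) (S n).

Lemma Sh_id n beta h : 2 * Sh n beta h = h n + h O - ssum (fun k => beta (S k) * (h (S k) - h k)) n.
Proof.
  unfold Sh. rewrite (ssum_ext _ (fun i => /2 * ((betaE n beta (S i) - betaE n beta i) * h i) + 0 * (fun _ => 0) i)).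
  2: intros; simpl; ring.
  rewrite ssum_lin, abel.
  assert (E1 : betaE n beta (S n) = 1). { unfold betaE. rewrite Nat.eqb_refl. reflexivity. }
  assert (E0 : betaE n beta O = -1) by reflexivity.
  rewrite E1, E0.
  rewrite (ssum_ext (fun k => betaE n beta (S k) * (h (S k) - h k)) (fun k => beta (S k) * (h (S k) - h k))).
  field.
  intros k Hk. unfold betaE. simpl. replace (k =? n)%nat with false. reflexivity.
  symmetry. apply Nat.eqb_neq. lia.
Qed.

Lemma Sh_A n beta h : 2 * Sh n beta h - 2 * h O = ssum (fun k => (1 - beta (S k)) * (h (S k) - h k)) n.
Proof.
  rewrite Sh_id. rewrite (ssum_ext (fun k => (1 - beta (S k)) * (h (S k) - h k))
    (fun k => 1 * (h (S k) - h k) + (-1) * (beta (S k) * (h (S k) - h k)))).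
  rewrite ssum_lin, ssum_tele. ring. intros; ring.
Qed.

Lemma Sh_B n beta h : 2 * h n - 2 * Sh n beta h = ssum (fun k => (1 + beta (S k)) * (h (S k) - h k)) n.
Proof.
  rewrite Sh_id. rewrite (ssum_ext (fun k => (1 + beta (S k)) * (h (S k) - h k))
    (fun k => 1 * (h (S k) - h k) + 1 * (beta (S k) * (h (S k) - h k)))).
  rewrite ssum_lin, ssum_tele. ring. intros; ring.
Qed.

Lemma Sh_ext n beta h1 h2 : (forall i, (i <= n)%nat -> h1 i = h2 i) -> Sh n beta h1 = Sh n beta h2.
Proof. intros H. unfold Sh. apply ssum_ext. intros. rewrite H by lia. reflexivity. Qed.

Lemma Sh_one n beta : Sh n beta (fun _ => 1) = 1.
Proof.
  pose proof (Sh_A n beta (fun _ => 1)) as H.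
  rewrite (ssum_ext _ (fun k => 0 * (fun _ => 0) k + 0 * (fun _ => 0) k)) in H.
  rewrite ssum_lin in H. lra. intros; ring.
Qed.

Lemma Sh_affine n beta z h : Sh n beta (fun i => z * h i - 1) = z * Sh n beta h - 1.
Proof.
  transitivity (z * Sh n beta h + (-1) * Sh n beta (fun _ => 1)).
  2: rewrite Sh_one; ring.
  unfold Sh. rewrite <- ssum_lin. apply ssum_ext. intros. ring.
Qed.

Lemma Tfun_Sh n V beta z : Tfun n V beta z = Sh n beta (fun i => / (z - exp (V i))).
Proof. unfold Tfun, Sh. rewrite sum_f_R0_ssum. reflexivity. Qed.

Lemma rv_nonneg z a b : (z < exp a /\ z < exp b) \/ (exp a < z /\ exp b < z) -> 0 <= rv z a b.
Proof.
  assert (key : forall c, 0 < c -> (z < c -> z * / c - 1 < 0) /\ (c < z -> 0 < z * / c - 1)).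
  { intros c Hc. split; intros H.
    - assert (z * / c < c * / c) by (apply Rmult_lt_compat_r; auto with real).
      rewrite Rinv_r in H0 by lra. lra.
    - assert (c * / c < z * / c) by (apply Rmult_lt_compat_r; auto with real).
      rewrite Rinv_r in H0 by lra. lra. }
  pose proof (exp_pos a). pose proof (exp_pos b).
  unfold rv. rewrite !exp_Ropp. unfold Rdiv. intros [[H1 H2]|[H1 H2]].
  - pose proof (proj1 (key _ H) H1). pose proof (proj1 (key _ H0) H2).
    assert (/ (z * / exp b - 1) < 0) by (apply Rinv_lt_0_compat; lra). nra.
  - pose proof (proj2 (key _ H) H1). pose proof (proj2 (key _ H0) H2).
    assert (0 < / (z * / exp b - 1)) by (apply Rinv_0_lt_compat; lra). nra.
Qed.

Lemma Df z x y : x < y -> (y < z \/ z < x) -> 0 <= / (z - y) - / (z - x).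
Proof.
  intros H [H1|H1];
  (replace (/ (z - y) - / (z - x)) with ((y - x) * / ((z - x) * (z - y))) by (field; split; lra);
   apply Rmult_le_pos; [lra | left; apply Rinv_0_lt_compat; nra]).
Qed.

Lemma Dg z x y : x < y -> (y < z \/ z < x) ->
  (0 <= z -> 0 <= y / (z - y) - x / (z - x)) /\ (z <= 0 -> y / (z - y) - x / (z - x) <= 0).
Proof.
  intros H H1.
  assert (Hp : 0 < (z - x) * (z - y)) by (destruct H1; nra).
  assert (Hne1 : z - x <> 0) by (destruct H1; lra).
  assert (Hne2 : z - y <> 0) by (destruct H1; lra).
  replace (y / (z - y) - x / (z - x)) with (z * (y - x) * / ((z - x) * (z - y))) by (field; split; auto).
  pose proof (Rinv_0_lt_compat _ Hp). set (w := / ((z - x) * (z - y))) in *. split; intros Hz.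
  - apply Rmult_le_pos; [apply Rmult_le_pos|]; lra.
  - assert (z * (y - x) <= 0) by nra. nra.
Qed.

Lemma Vmono n V (HV : forall i, (i < n)%nat -> V i < V (S i)) :
  forall i k, (i < k)%nat -> (k <= n)%nat -> exp (V i) < exp (V k).
Proof.
  intros i k; induction k; intros H1 H2. lia.
  apply exp_increasing.
  destruct (Nat.eq_dec i k). subst. apply HV; lia.
  apply Rlt_trans with (V k). apply exp_lt_inv. apply IHk; lia. apply HV; lia.
Qed.

Lemma Vmono_le n V (HV : forall i, (i < n)%nat -> V i < V (S i)) :
  forall i k, (i <= k)%nat -> (k <= n)%nat -> exp (V i) <= exp (V k).
Proof.
  intros i k H1 H2. destruct (Nat.eq_dec i k). subst; lra. left; apply (Vmono n); auto; lia.
Qed.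

Section S.
Variables (n : nat) (V : nat -> R) (beta : nat -> R) (z : R).
Hypothesis HV : forall i : nat, (i < n)%nat -> V i < V (S i).
Hypothesis Hbeta : forall i : nat, (1 <= i <= n)%nat -> -1 <= beta i <= 1.
Definition hf := fun i => / (z - exp (V i)).
Definition hg := fun i => exp (V i) / (z - exp (V i)).

Lemma signA : (forall k, (k < n)%nat -> 1 - beta (S k) = 0 \/ exp (V (S k)) < z \/ z < exp (V k)) ->
  0 <= 2 * Sh n beta hf - 2 * hf O /\
  (0 <= z -> 0 <= 2 * Sh n beta hg - 2 * hg O) /\ (z <= 0 -> 2 * Sh n beta hg - 2 * hg O <= 0).
Proof.
  intros H. rewrite !Sh_A. split; [|split; intros Hz].
  - apply ssum_nonneg. intros k Hk. destruct (H k Hk) as [E|Hs]. rewrite E; lra.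
    apply Rmult_le_pos. assert (-1 <= beta (S k) <= 1) by (apply Hbeta; lia); lra. unfold hf; apply Df; auto. apply (Vmono n); auto; lia.
  - apply ssum_nonneg. intros k Hk. destruct (H k Hk) as [E|Hs]. rewrite E; lra.
    apply Rmult_le_pos. assert (-1 <= beta (S k) <= 1) by (apply Hbeta; lia); lra. unfold hg; apply Dg; auto. apply (Vmono n); auto; lia.
  - apply ssum_nonpos. intros k Hk. destruct (H k Hk) as [E|Hs]. rewrite E; lra.
    assert (0 <= 1 - beta (S k)) by (assert (-1 <= beta (S k) <= 1) by (apply Hbeta; lia); lra).
    assert (hg (S k) - hg k <= 0). unfold hg; apply Dg; auto. apply (Vmono n); auto; lia. nra.
Qed.

Lemma signB : (forall k, (k < n)%nat -> 1 + beta (S k) = 0 \/ exp (V (S k)) < z \/ z < exp (V k)) ->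
  0 <= 2 * hf n - 2 * Sh n beta hf /\
  (0 <= z -> 0 <= 2 * hg n - 2 * Sh n beta hg).
Proof.
  intros H. rewrite !Sh_B. split; [|intros Hz].
  - apply ssum_nonneg. intros k Hk. destruct (H k Hk) as [E|Hs]. rewrite E; lra.
    apply Rmult_le_pos. assert (-1 <= beta (S k) <= 1) by (apply Hbeta; lia); lra. unfold hf; apply Df; auto. apply (Vmono n); auto; lia.
  - apply ssum_nonneg. intros k Hk. destruct (H k Hk) as [E|Hs]. rewrite E; lra.
    apply Rmult_le_pos. assert (-1 <= beta (S k) <= 1) by (apply Hbeta; lia); lra. unfold hg; apply Dg; auto. apply (Vmono n); auto; lia.
Qed.
End S.
Lemma Im_cterm c x : c = 0 \/ 0 <= x -> Im (cterm c (RtoC x)) = 0.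
Proof.
  intros H. unfold cterm. destruct (Req_EM_T c 0) as [E|E]. reflexivity.
  destruct H as [H|H]; [contradiction|].
  unfold Ln, Arg. simpl.
  destruct (Req_EM_T 0 0) as [_|E']; [|lra].
  destruct (Rlt_dec x 0) as [L|_]; [lra|].
  unfold Rdiv. rewrite Rmult_0_l, atan_0. ring.
Qed.

Lemma Im_sum_n_m (f : nat -> C) a b :
  (forall k, (a <= k <= b)%nat -> Im (f k) = 0) -> Im (sum_n_m f a b) = 0.
Proof.
  induction b; intros H.
  - destruct a. rewrite sum_n_n. apply H; lia.
    rewrite sum_n_m_zero by lia. reflexivity.
  - destruct (Nat.le_gt_cases a (S b)).
    + rewrite sum_n_Sm by lia. change (Im (Cplus (sum_n_m f a b) (f (S b))) = 0).
      unfold Cplus; simpl. change (Im (sum_n_m f a b) + Im (f (S b)) = 0).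
      rewrite H by lia. rewrite IHb. ring. intros; apply H; lia.
    + rewrite sum_n_m_zero by lia. reflexivity.
Qed.



Lemma chi_im n V beta v0 z tau j :
  (forall i, (1 <= i <= j - 1)%nat -> / 2 * (1 + beta i) = 0 \/ 0 <= rv z (V i) (V (i - 1)%nat)) ->
  (forall i, (S j <= i <= n)%nat -> / 2 * (1 - beta i) = 0 \/ 0 <= rv z (V i) (V (i - 1)%nat)) ->
  (/ 2 * (1 + beta j) = 0 \/ 0 <= rv z tau (V (j - 1)%nat)) ->
  (/ 2 * (1 - beta j) = 0 \/ 0 <= rv z (V j) tau) ->
  Im (chi n V beta v0 z tau j) = 0.
Proof.
  intros H1 H2 H3 H4. unfold chi.
  change (- Im (sum_n_m (fun i => cterm (/ 2 * (1 + beta i)) (ratio z (V i) (V (i - 1)%nat))) 1 (j - 1))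
    + - Im (cterm (/ 2 * (1 + beta j)) (ratio z tau (V (j - 1)%nat)))
    + Im (cterm (/ 2 * (1 - beta j)) (ratio z (V j) tau))
    + Im (sum_n_m (fun i => cterm (/ 2 * (1 - beta i)) (ratio z (V i) (V (i - 1)%nat))) (S j) n)
    + 0 = 0).
  rewrite !Im_sum_n_m. unfold ratio. rewrite !Im_cterm; auto. ring.
  intros k Hk. unfold ratio. apply Im_cterm. apply H2; auto.
  intros k Hk. unfold ratio. apply Im_cterm. apply H1; auto.
Qed.

Lemma finish T N z : N = z * T - 1 -> ((0 < T /\ 0 < N) \/ (T < 0 /\ N < 0)) -> T <> 0 /\ z - / T > 0.
Proof.
  intros E H. assert (T <> 0) by (destruct H; lra). split; auto.
  replace (z - / T) with (N * / T) by (rewrite E; field; auto).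
  destruct H as [[H1 H2]|[H1 H2]].
  - assert (0 < / T) by (apply Rinv_0_lt_compat; lra). nra.
  - assert (/ T < 0) by (apply Rinv_lt_0_compat; lra). nra.
Qed.

Lemma NT n V beta z : (forall i, (i <= n)%nat -> z <> exp (V i)) ->
  Sh n beta (hg V z) = z * Sh n beta (hf V z) - 1.
Proof.
  intros H. rewrite <- Sh_affine. apply Sh_ext. intros i Hi. unfold hg, hf. field.
  specialize (H i Hi). lra.
Qed.

Theorem proposition4p1
  (n : nat) (V : nat -> R) (beta : nat -> R) (Vf : R -> R)
  (HV : forall i : nat, (i < n)%nat -> V i < V (S i))
  (Hbeta : forall i : nat, (1 <= i <= n)%nat -> -1 <= beta i <= 1)
  (Hdiff : forall i : nat, (i <= n)%nat -> betaE n beta i <> betaE n beta (S i))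
  (HVf : forall i : nat, (1 <= i <= n)%nat -> forall x : R,
           V (i - 1)%nat <= x <= V i ->
           Vf x = Vf (V (i - 1)%nat) + beta i * (x - V (i - 1)%nat)) :
  forall z : R, inU n V beta z ->
    Tfun n V beta z <> 0 /\
    z - / Tfun n V beta z > 0 /\
    forall j : nat, (1 <= j <= n)%nat ->
      V (j - 1)%nat < ln (z - / Tfun n V beta z) < V j ->
      Im (chi n V beta (Vf (V 0%nat)) z (ln (z - / Tfun n V beta z)) j) = 0.
Proof.
  intros z Hz.
  pose proof (Vmono n V HV) as Hm. pose proof (Vmono_le n V HV) as Hml.
  assert (Hep : forall i, 0 < exp (V i)) by (intros; apply exp_pos).
  rewrite Tfun_Sh. fold (hf V z).
  set (T := Sh n beta (hf V z)).
  set (N := Sh n beta (hg V z)).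
  assert (Hwz : forall w, w = z - / T -> 0 < w -> forall j, (1 <= j <= n)%nat ->
     V (j - 1)%nat < ln w < V j -> exp (V (j - 1)%nat) < w < exp (V j)).
  { intros w Ew Hw j Hj [H1 H2]. rewrite <- (exp_ln w Hw). split; apply exp_increasing; auto. }
  destruct Hz as [Hz|[Hz|[K [HK [HbK HzK]]]]].
  -
    assert (Ha : forall i, (i <= n)%nat -> z < exp (V i)).
    { intros i Hi. pose proof (Hml 0%nat i ltac:(lia) Hi). lra. }
    assert (EN : N = z * T - 1). { apply NT. intros i Hi; specialize (Ha i Hi); lra. }
    assert (HB := signB n V beta z HV Hbeta ltac:(intros k Hk; right; right; apply Ha; lia)).
    assert (HA := signA n V beta z HV Hbeta ltac:(intros k Hk; right; right; apply Ha; lia)).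
    fold T N in HA, HB.
    assert (hf V z n < 0) by (unfold hf; apply Rinv_lt_0_compat; specialize (Ha n (le_n n)); lra).
    assert (hg V z n < 0). { unfold hg, Rdiv. specialize (Ha n (le_n n)).
      assert (/ (z - exp (V n)) < 0) by (apply Rinv_lt_0_compat; lra). specialize (Hep n). nra. }
    assert (hg V z 0%nat < 0). { unfold hg, Rdiv. specialize (Ha 0%nat ltac:(lia)).
      assert (/ (z - exp (V 0%nat)) < 0) by (apply Rinv_lt_0_compat; lra). specialize (Hep 0%nat). nra. }
    assert (HN : N < 0). { destruct (Rle_dec 0 z). pose proof (proj2 HB r). lra. pose proof (proj2 (proj2 HA) ltac:(lra)). lra. }
    destruct (finish T N z EN ltac:(right; lra)) as [HT0 Hw]. split; auto. split; auto.
    intros j Hj Htau. pose proof (Hwz _ eq_refl Hw j Hj Htau) as [Hw1 Hw2].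
    assert (Hza : z < exp (V (j - 1)%nat)) by (apply Ha; lia).
    apply chi_im.
    + intros i Hi. right. apply rv_nonneg. left. split; apply Ha; lia.
    + intros i Hi. right. apply rv_nonneg. left. split; apply Ha; lia.
    + right. apply rv_nonneg. left. rewrite exp_ln by lra. split; [lra| apply Ha; lia].
    + right. apply rv_nonneg. left. rewrite exp_ln by lra. split; [apply Ha; lia|lra].
  -
    assert (Ha : forall i, (i <= n)%nat -> exp (V i) < z).
    { intros i Hi. pose proof (Hml i n Hi (le_n n)). lra. }
    assert (EN : N = z * T - 1). { apply NT. intros i Hi; specialize (Ha i Hi); lra. }
    assert (HA := signA n V beta z HV Hbeta ltac:(intros k Hk; right; left; apply Ha; lia)).
    fold T N in HA.
    assert (Hz0 : 0 < z) by (specialize (Hep n); lra).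
    assert (0 < hf V z 0%nat) by (unfold hf; apply Rinv_0_lt_compat; specialize (Ha 0%nat ltac:(lia)); lra).
    assert (0 < hg V z 0%nat). { unfold hg, Rdiv. specialize (Ha 0%nat ltac:(lia)).
      assert (0 < / (z - exp (V 0%nat))) by (apply Rinv_0_lt_compat; lra). specialize (Hep 0%nat). nra. }
    assert (HN : 0 < N) by (pose proof (proj1 (proj2 HA) ltac:(lra)); lra).
    destruct (finish T N z EN ltac:(left; lra)) as [HT0 Hw]. split; auto. split; auto.
    intros j Hj Htau. pose proof (Hwz _ eq_refl Hw j Hj Htau) as [Hw1 Hw2].
    assert (Hza : exp (V j) < z) by (apply Ha; lia).
    apply chi_im.
    + intros i Hi. right. apply rv_nonneg. right. split; apply Ha; lia.
    + intros i Hi. right. apply rv_nonneg. right. split; apply Ha; lia.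
    + right. apply rv_nonneg. right. rewrite exp_ln by lra. split; [lra| apply Ha; lia].
    + right. apply rv_nonneg. right. rewrite exp_ln by lra. split; [apply Ha; lia|lra].
  -
    destruct HzK as [HzK1 HzK2].
    assert (Hbel : forall i, (i < K)%nat -> exp (V i) < z).
    { intros i Hi. pose proof (Hml i (K - 1)%nat ltac:(lia) ltac:(lia)). lra. }
    assert (Habo : forall i, (K <= i <= n)%nat -> z < exp (V i)).
    { intros i Hi. pose proof (Hml K i ltac:(lia) ltac:(lia)). lra. }
    assert (Hz0 : 0 < z) by (specialize (Hep (K - 1)%nat); lra).
    assert (EN : N = z * T - 1).
    { apply NT. intros i Hi. destruct (Nat.lt_ge_cases i K).
      specialize (Hbel i H); lra. specialize (Habo i ltac:(lia)); lra. }
    assert (Hside : forall k, (k < n)%nat -> S k <> K -> exp (V (S k)) < z \/ z < exp (V k)).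
    { intros k Hk HkK. destruct (Nat.lt_ge_cases (S k) K).
      left; apply Hbel; lia. right; apply Habo; lia. }
    destruct HbK as [Hb1|Hb1].
    +
      assert (HA := signA n V beta z HV Hbeta ltac:(intros k Hk; destruct (Nat.eq_dec (S k) K) as [E|E];
        [left; rewrite E, Hb1; ring | right; apply Hside; auto])).
      fold T N in HA.
      assert (0 < hf V z 0%nat) by (unfold hf; apply Rinv_0_lt_compat; specialize (Hbel 0%nat ltac:(lia)); lra).
      assert (0 < hg V z 0%nat). { unfold hg, Rdiv. specialize (Hbel 0%nat ltac:(lia)).
        assert (0 < / (z - exp (V 0%nat))) by (apply Rinv_0_lt_compat; lra). specialize (Hep 0%nat). nra. }
      assert (HN : 0 < N) by (pose proof (proj1 (proj2 HA) ltac:(lra)); lra).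
      assert (HT : 0 < T) by (pose proof (proj1 HA); lra).
      destruct (finish T N z EN ltac:(left; lra)) as [HT0 Hw]. split; auto. split; auto.
      assert (Hwlt : z - / T < z) by (assert (0 < / T) by (apply Rinv_0_lt_compat; lra); lra).
      intros j Hj Htau. pose proof (Hwz _ eq_refl Hw j Hj Htau) as [Hw1 Hw2].
      assert (HjK : (j <= K)%nat).
      { destruct (Nat.le_gt_cases j K); auto. pose proof (Habo (j - 1)%nat ltac:(lia)). lra. }
      apply chi_im.
      * intros i Hi. right. apply rv_nonneg. right. split; apply Hbel; lia.
      * intros i Hi. destruct (Nat.lt_total i K) as [L|[E|L]].
        -- right. apply rv_nonneg. right. split; apply Hbel; lia.
        -- left. rewrite E, Hb1. field.
        -- right. apply rv_nonneg. left. split; apply Habo; lia.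
      * right. apply rv_nonneg. right. rewrite exp_ln by lra. split; [lra| apply Hbel; lia].
      * destruct (Nat.eq_dec j K) as [E|E].
        -- left. rewrite E, Hb1. field.
        -- right. apply rv_nonneg. right. rewrite exp_ln by lra. split; [apply Hbel; lia|lra].
    +
      assert (HB := signB n V beta z HV Hbeta ltac:(intros k Hk; destruct (Nat.eq_dec (S k) K) as [E|E];
        [left; rewrite E, Hb1; ring | right; apply Hside; auto])).
      fold T N in HB.
      assert (hf V z n < 0) by (unfold hf; apply Rinv_lt_0_compat; specialize (Habo n ltac:(lia)); lra).
      assert (hg V z n < 0). { unfold hg, Rdiv. specialize (Habo n ltac:(lia)).
        assert (/ (z - exp (V n)) < 0) by (apply Rinv_lt_0_compat; lra). specialize (Hep n). nra. }
      assert (HN : N < 0) by (pose proof (proj2 HB ltac:(lra)); lra).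
      assert (HT : T < 0) by (pose proof (proj1 HB); lra).
      destruct (finish T N z EN ltac:(right; lra)) as [HT0 Hw]. split; auto. split; auto.
      assert (Hwlt : z < z - / T) by (assert (/ T < 0) by (apply Rinv_lt_0_compat; lra); lra).
      intros j Hj Htau. pose proof (Hwz _ eq_refl Hw j Hj Htau) as [Hw1 Hw2].
      assert (HjK : (K <= j)%nat).
      { destruct (Nat.le_gt_cases K j); auto. pose proof (Hbel j ltac:(lia)). lra. }
      apply chi_im.
      * intros i Hi. destruct (Nat.lt_total i K) as [L|[E|L]].
        -- right. apply rv_nonneg. right. split; apply Hbel; lia.
        -- left. rewrite E, Hb1. field.
        -- right. apply rv_nonneg. left. split; apply Habo; lia.
      * intros i Hi. right. apply rv_nonneg. left. split; apply Habo; lia.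
      * destruct (Nat.eq_dec j K) as [E|E].
        -- left. rewrite E, Hb1. field.
        -- right. apply rv_nonneg. left. rewrite exp_ln by lra. split; [lra| apply Habo; lia].
      * right. apply rv_nonneg. left. rewrite exp_ln by lra. split; [apply Habo; lia|lra].
Qed.
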